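(* For every integer $l\ge1$, let $\mathcal{I}_6(l)$ be the index coding instance on $[4l+1]$ with $A_{2i-1}=\{2j: j\in[2l]\setminus\{i\}\}\cup\{4l+1\}$ and $A_{2i}=\{2i-1\}$ for $i\in[2l]$, and $A_{4l+1}=\{2i-1: i\in[2l]\}$. Then the UMCD coding scheme is optimal for $\mathcal{I}_6(l)$, i.e. $\beta(\mathcal{I}_6(l))=\beta_{\text{UMCD}}(\mathcal{I}_6(l))$.
   Context: Index coding: messages $x_i\in\mathbb{F}_q^t$; receiver $i$ wants $x_i$ and knows $x_j$, $j\in A_i\subseteq[m]\setminus\{i\}$. A $(t,r)$ index code is an encoder $\phi:\mathbb{F}_q^{mt}\to\mathbb{F}_q^r$ plus decoders $\psi_i$ with $\psi_i(\phi(x),(x_j)_{j\in A_i})=x_i$ for all messages and all $i$; $\beta(\mathcal{I})$ is the infimum of $r/t$ over all $t$ and all such codes (over finite fields). $B_i=[m]\setminus(A_i\cup\{i\})$. For a $0/1$ matrix $\boldsymbol{G}$, $\boldsymbol{G}_{[k]}^L$ is the submatrix of its first $k$ rows and columns $L$; $\mathrm{mcm}$ is the maximum number of $1$-entries in distinct rows and columns (0 if no columns). UMCD algorithm: $N=[m]$, $k=0$; while $N\neq\emptyset$: $k\leftarrow k+1$; pick $w\in N$ minimizing $|A_w|$ over $N$ (arbitrary tie-breaking); row $k$ of $\boldsymbol{G}$ is the indicator of $\{w\}\cup A_w$; remove $w$ from $N$; remove every $i\in N$ with $\mathrm{mcm}(\boldsymbol{G}_{[k]}^{\{i\}\cup B_i})=\mathrm{mcm}(\boldsymbol{G}_{[k]}^{B_i})+1$;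 output $\beta_{\text{UMCD}}=k$. *)

(* Defs.v *)
From HB Require Import structures.
From mathcomp Require Import all_boot all_order all_algebra.
Set Implicit Arguments. Unset Strict Implicit. Unset Printing Implicit Defensive.
Import GRing.Theory.

(* Receivers/messages are indexed by 'I_m (0-based: receiver v is the
   paper's receiver v+1).  An instance is given by the side-information
   sets A : 'I_m -> {set 'I_m}. *)

Definition Bset m (A : 'I_m -> {set 'I_m}) (i : 'I_m) : {set 'I_m} :=
  ~: (A i :|: [set i]).

(* A (t,r) index code over the finite field F: an encoder phi : F^{mt} -> F^r
   and decoders psi_i, where psi_i receives phi(x) and the side information
   (x_j)_{j in A_i} (encoded as the message vector with every coordinate
   outside A_i replaced by 0). *)
Definition is_index_code m (A : 'I_m -> {set 'I_m}) (F : finFieldType) (t r : nat)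
  (phi : ('I_m -> 'rV[F]_t) -> 'rV[F]_r)
  (psi : 'I_m -> 'rV[F]_r -> ('I_m -> 'rV[F]_t) -> 'rV[F]_t) : Prop :=
  forall (x : 'I_m -> 'rV[F]_t) (i : 'I_m),
    psi i (phi x) (fun j => if j \in A i then x j else 0%R) = x i.

Definition has_code m (A : 'I_m -> {set 'I_m}) (t r : nat) : Prop :=
  exists (F : finFieldType) (phi : ('I_m -> 'rV[F]_t) -> 'rV[F]_r)
         (psi : 'I_m -> 'rV[F]_r -> ('I_m -> 'rV[F]_t) -> 'rV[F]_t),
    is_index_code A phi psi.

(* beta(A) = k : the infimum of r/t over all t >= 1 and all (t,r) index codes
   (over all finite fields) equals the natural number k, i.e. k is a lower
   bound of all r/t and for every n >= 1 some r/t < k + 1/n. *)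
Definition beta_eq m (A : 'I_m -> {set 'I_m}) (k : nat) : Prop :=
  (forall t r, 0 < t -> has_code A t r -> k * t <= r) /\
  (forall n, 0 < n -> exists t r, [/\ 0 < t, has_code A t r & n * r < (n * k + 1) * t]).

(* The matrix G with k rows is a sequence of k row supports (row p has 1s
   exactly in the columns of nth set0 G p). *)
Definition is_matching m (G : seq {set 'I_m}) (L : {set 'I_m})
  (M : {set 'I_(size G) * 'I_m}) : bool :=
  [forall p in M, (p.2 \in L) && (p.2 \in nth set0 G p.1)] &&
  [forall p in M, forall q in M, ((p.1 == q.1) || (p.2 == q.2)) ==> (p == q)].

Definition mcm m (G : seq {set 'I_m}) (L : {set 'I_m}) : nat :=
  \max_(M : {set 'I_(size G) * 'I_m} | is_matching L M) #|M|.

Definition umcd_next m (A : 'I_m -> {set 'I_m}) (N : {set 'I_m})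
  (G : seq {set 'I_m}) : {set 'I_m} :=
  [set i in N | mcm G (i |: Bset A i) != (mcm G (Bset A i)).+1].

(* umcd_runs A N G k : starting from the state (N, G), some execution of the
   UMCD loop (with some admissible tie-breaking) terminates with output k
   (= number of rows of the final matrix). *)
Inductive umcd_runs m (A : 'I_m -> {set 'I_m}) :
    {set 'I_m} -> seq {set 'I_m} -> nat -> Prop :=
| umcd_done (G : seq {set 'I_m}) : umcd_runs A set0 G (size G)
| umcd_step (N : {set 'I_m}) (G : seq {set 'I_m}) (w : 'I_m) (k : nat) :
    w \in N ->
    (forall v, v \in N -> #|A w| <= #|A v|) ->
    umcd_runs A (umcd_next A (N :\ w) (rcons G (w |: A w))) (rcons G (w |: A w)) k ->
    umcd_runs A N G k.

Definition umcd_out m (A : 'I_m -> {set 'I_m}) (k : nat) : Prop :=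
  umcd_runs A setT [::] k.

(* Paper's (1-based) side information: q \in A_p. *)
Definition I6_rel (l p q : nat) : bool :=
  if p == 4 * l + 1 then odd q && (q < 4 * l + 1)
  else if odd p then (~~ odd q && (q != p.+1)) || (q == 4 * l + 1)
  else q == p.-1.

Definition I6 (l : nat) : 'I_(4 * l + 1) -> {set 'I_(4 * l + 1)} :=
  fun v => [set x : 'I_(4 * l + 1) | I6_rel l v.+1 x.+1].
Arguments I6 l : clear implicits.

(* Main.v *)
Require Import Defs.
From HB Require Import structures.
From mathcomp Require Import all_boot all_order all_algebra.
From mathcomp Require Import zify ring.
From Stdlib Require Import FunctionalExtensionality.
Set Implicit Arguments. Unset Strict Implicit. Unset Printing Implicit Defensive.

Lemma matchingP m (G : seq {set 'I_m}) L M :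
  @is_matching m G L M ->
  (forall p, p \in M -> (p.2 \in L) && (p.2 \in nth set0 G p.1)) /\
  (forall p q, p \in M -> q \in M -> (p.1 == q.1) || (p.2 == q.2) -> p = q).
Proof.
case/andP=> /forallP H1 /forallP H2; split.
  by move=> p pM; have := H1 p; rewrite pM.
move=> p q pM qM e; have := H2 p; rewrite pM /= => /forallP /(_ q).
by rewrite qM e /= => /eqP.
Qed.

Lemma mcm_le_size m (G : seq {set 'I_m}) L : mcm G L <= size G.
Proof.
apply/bigmax_leqP => M /matchingP [_ H].
rewrite -(card_in_imset (f := fun p => p.1)); last first.
  by move=> p q pM qM e; apply: H => //; rewrite e eqxx.
by apply: leq_trans (max_card _) _; rewrite card_ord.
Qed.

Lemma mcm_le_card m (G : seq {set 'I_m}) L : mcm G L <= #|L|.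
Proof.
apply/bigmax_leqP => M /matchingP [H1 H].
rewrite -(card_in_imset (f := fun p => p.2)); last first.
  by move=> p q pM qM e; apply: H => //; rewrite e eqxx orbT.
apply: subset_leq_card; apply/subsetP => x /imsetP [p pM ->].
by case/andP: (H1 p pM).
Qed.

Lemma mcm_U1 m (G : seq {set 'I_m}) L v : mcm G (v |: L) <= (mcm G L).+1.
Proof.
apply/bigmax_leqP => M HM; have [H1 H] := matchingP HM.
set M' := [set p in M | p.2 != v].
have HM' : is_matching L M'.
  apply/andP; split.
    apply/forallP => p; apply/implyP; rewrite inE => /andP [pM pv].
    by case/andP: (H1 p pM); rewrite in_setU1 (negbTE pv) /= => -> ->.
  apply/forallP => p; apply/implyP; rewrite inE => /andP [pM pv].
  apply/forallP => q; apply/implyP; rewrite inE => /andP [qM _].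
  by apply/implyP => e; rewrite (H p q pM qM e).
have : #|M'| <= mcm G L by rewrite /mcm; exact: (leq_bigmax_cond _ HM').
move=> le; apply: (@leq_trans (#|M'|.+1)); last by [].
have -> : M = M' :|: [set p in M | p.2 == v].
  by apply/setP => p; rewrite !inE; case: (p \in M); case: (p.2 == v).
apply: leq_trans (leq_card_setU _ _) _; rewrite -addn1 leq_add2l.
apply/card_le1_eqP => p q; rewrite !inE => /andP [pM /eqP pv] /andP [qM /eqP qv].
by apply: H => //; rewrite pv qv eqxx orbT.
Qed.

Lemma mcm_lb m (G : seq {set 'I_m}) (L : {set 'I_m}) (f : 'I_(size G) -> 'I_m) :
  injective f -> (forall p, f p \in nth set0 G p) -> (forall p, f p \in L) ->
  size G <= mcm G L.
Proof.
move=> fi fG fL.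
set M := [set (p, f p) | p : 'I_(size G)].
have HM : is_matching L M.
  apply/andP; split.
    by apply/forallP => p; apply/implyP => /imsetP [a _ ->] /=; rewrite fL fG.
  apply/forallP => p; apply/implyP => /imsetP [a _ ->] /=.
  apply/forallP => q; apply/implyP => /imsetP [b _ ->] /=.
  apply/implyP => /orP [/eqP -> // | /eqP /fi -> //].
have : #|M| <= mcm G L by rewrite /mcm; exact: (leq_bigmax_cond _ HM).
rewrite card_imset ?card_ord //.
by move=> a b [].
Qed.

Lemma mcm_lb_map m (R : 'I_m -> {set 'I_m}) (ws : seq 'I_m) (L : {set 'I_m}) (F : 'I_m -> 'I_m) :
  uniq ws -> {in ws &, injective F} -> (forall w, w \in ws -> F w \in R w) ->
  (forall w, w \in ws -> F w \in L) -> size ws <= mcm (map R ws) L.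
Proof.
case: ws => [|w0 ws']; first by [].
set ws := w0 :: ws' => U Fi FR FL.
have sz : size (map R ws) = size ws by rewrite size_map.
rewrite -sz.
pose f (p : 'I_(size (map R ws))) := F (nth w0 ws p).
have pin (p : 'I_(size (map R ws))) : nth w0 ws p \in ws.
  by apply: mem_nth; rewrite -sz.
apply: (mcm_lb (f := f)).
- move=> p q /Fi e; apply/val_inj/eqP.
  have hp : p < size ws by rewrite -sz.
  have hq : q < size ws by rewrite -sz.
  by rewrite -(nth_uniq w0 hp hq U) e ?pin.
- by move=> p; rewrite /f (nth_map w0) -?sz //; apply: FR.
- by move=> p; apply: FL.
Qed.

Lemma cO_proof l : 4 * l < 4 * l + 1. Proof. by rewrite addn1. Qed.
Definition cO l : 'I_(4 * l + 1) := Ordinal (cO_proof l).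
Definition nd l (n : nat) : 'I_(4 * l + 1) := insubd (cO l) n.
Lemma vnd l n : n < 4 * l + 1 -> nat_of_ord (nd l n) = n.
Proof. by move=> h; rewrite /nd val_insubd h. Qed.

Definition R6 l (w : 'I_(4 * l + 1)) := w |: I6 l w.
Arguments R6 l w : clear implicits.

Lemma A_odd l (v x : 'I_(4 * l + 1)) : odd v -> (x \in I6 l v) = (nat_of_ord x == v.-1).
Proof.
move=> ov; have := ltn_ord v; have := ltn_ord x; rewrite inE /I6_rel.
have -> : (v.+1 == 4 * l + 1) = false by apply/negbTE; lia.
rewrite /= ov /=; move=> _ _; apply/eqP/eqP; lia.
Qed.

Lemma A_even l (v x : 'I_(4 * l + 1)) : ~~ odd v -> nat_of_ord v < 4 * l ->
  (x \in I6 l v) = (odd x && (nat_of_ord x != v.+1)) || (nat_of_ord x == 4 * l).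
Proof.
move=> ov vl; have := ltn_ord x; rewrite inE /I6_rel.
have -> : (v.+1 == 4 * l + 1) = false by apply/negbTE; lia.
rewrite /= (negbTE ov) /= => _.
have -> : (x.+1 == 4 * l + 1) = (nat_of_ord x == 4 * l) by apply/eqP/eqP; lia.
by rewrite negbK.
Qed.

Lemma A_c l (v x : 'I_(4 * l + 1)) : nat_of_ord v = 4 * l ->
  (x \in I6 l v) = ~~ odd x && (nat_of_ord x < 4 * l).
Proof.
move=> vl; have := ltn_ord x; rewrite inE /I6_rel.
have -> : (v.+1 == 4 * l + 1) = true by apply/eqP; lia.
move=> _; rewrite /=; congr (_ && _); lia.
Qed.

Lemma BE l (v x : 'I_(4 * l + 1)) : (x \in Bset (I6 l) v) = (nat_of_ord x != nat_of_ord v) && (x \notin I6 l v).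
Proof. by rewrite /Bset in_setC in_setU in_set1 negb_or andbC. Qed.

Lemma RE l (w x : 'I_(4 * l + 1)) : (x \in R6 l w) = (nat_of_ord x == nat_of_ord w) || (x \in I6 l w).
Proof. by rewrite /R6 in_setU1. Qed.

Lemma mcm_lb_nat l (ws : seq 'I_(4 * l + 1)) (L : {set 'I_(4 * l + 1)}) (Fn : nat -> nat) :
  uniq ws ->
  (forall w, w \in ws -> Fn w < 4 * l + 1 /\
     (forall x : 'I_(4 * l + 1), nat_of_ord x = Fn w -> (x \in R6 l w) && (x \in L))) ->
  (forall w1 w2, w1 \in ws -> w2 \in ws -> Fn w1 = Fn w2 -> nat_of_ord w1 = nat_of_ord w2) ->
  size ws <= mcm (map (R6 l) ws) L.
Proof.
move=> U H Hi.
apply: (mcm_lb_map (F := fun w => nd l (Fn w))) => //.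
- move=> w1 w2 h1 h2 e; apply/ord_inj/Hi => //.
  by move: e => /(congr1 (@nat_of_ord _)); rewrite !vnd //; [case: (H _ h2) | case: (H _ h1)].
- move=> w h; case: (H w h) => lt P.
  by case/andP: (P (nd l (Fn w)) (vnd lt)).
- move=> w h; case: (H w h) => lt P.
  by case/andP: (P (nd l (Fn w)) (vnd lt)).
Qed.

Lemma card_le_img m n (L : {set 'I_m}) (g : nat -> nat) :
  (forall x, x \in L -> exists2 b, b < n & nat_of_ord x = g b) -> #|L| <= n.
Proof.
case: (set_0Vmem L) => [-> _| [x0 x0L] H]; first by rewrite cards0.
apply: (@leq_trans #|[set insubd x0 (g b) | b : 'I_n]|).
  apply: subset_leq_card; apply/subsetP => x xL.
  case: (H x xL) => b bn e; apply/imsetP; exists (Ordinal bn) => //.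
  by apply/val_inj; rewrite /= val_insubd -e ltn_ord.
by apply: leq_trans (leq_imset_card _ _) _; rewrite card_ord.
Qed.

Definition Eset l : {set 'I_(4 * l + 1)} := [set x : 'I_(4 * l + 1) | odd x].

Lemma card_Eset l : #|Eset l| = 2 * l.
Proof.
have -> : Eset l = [set nd l (2 * b + 1) | b : 'I_(2 * l)].
  apply/setP => x; rewrite inE; apply/idP/imsetP.
    move=> ox; have := ltn_ord x => hx.
    have hb : x %/ 2 < 2 * l by lia.
    exists (Ordinal hb) => //; apply/ord_inj; rewrite vnd /=; lia.
  case=> b _ ->; have := ltn_ord b => hb; rewrite vnd; lia.
rewrite card_imset ?card_ord // => a b /(congr1 (@nat_of_ord _)).
have := ltn_ord a; have := ltn_ord b => ha hb.
rewrite !vnd; try lia. move=> e; apply/ord_inj; lia.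
Qed.

Lemma card_A_odd l (w : 'I_(4 * l + 1)) : odd w -> #|I6 l w| = 1.
Proof.
move=> ow; have := ltn_ord w => hw.
have -> : I6 l w = [set nd l w.-1].
  by apply/setP => x; rewrite in_set1 A_odd //; apply/eqP/eqP => [e|->];
    [apply/ord_inj; rewrite vnd; lia | rewrite vnd; lia].
by rewrite cards1.
Qed.

Lemma card_A_even l (w : 'I_(4 * l + 1)) : 0 < l -> ~~ odd w -> 2 <= #|I6 l w|.
Proof.
move=> l0 ow; have := ltn_ord w => hw.
have [wc|wc] := ltnP w (4 * l).
  have h1 : (if nat_of_ord w == 0 then 3 else 1) < 4 * l + 1 by case: ifP; lia.
  have h2 : 4 * l < 4 * l + 1 by lia.
  apply: (@leq_trans #|[set nd l (if nat_of_ord w == 0 then 3 else 1); nd l (4 * l)]|).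
    rewrite cards2; case: eqP => // /(congr1 (@nat_of_ord _)); rewrite !vnd //.
    case: ifP; lia.
  apply: subset_leq_card; apply/subsetP => x; rewrite in_set2 => /orP [] /eqP ->.
    by rewrite A_even // (vnd h1); case: ifP; lia.
  by rewrite A_even // (vnd h2); lia.
have h1 : 0 < 4 * l + 1 by lia.
have h2 : 2 < 4 * l + 1 by lia.
apply: (@leq_trans #|[set nd l 0; nd l 2]|).
  rewrite cards2; case: eqP => // /(congr1 (@nat_of_ord _)); rewrite !vnd //.
apply: subset_leq_card; apply/subsetP => x; rewrite in_set2 => /orP [] /eqP ->.
  by rewrite A_c ?(vnd h1) //; lia.
by rewrite A_c ?(vnd h2) //; lia.
Qed.

Lemma nonrem l (ws : seq 'I_(4 * l + 1)) (v : 'I_(4 * l + 1)) :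
  uniq ws -> all (fun u : 'I_(4 * l + 1) => odd u) ws -> v \notin ws ->
  mcm (map (R6 l) ws) (v |: Bset (I6 l) v) != (mcm (map (R6 l) ws) (Bset (I6 l) v)).+1.
Proof.
move=> U /allP Ho vn.
have vl := ltn_ord v.
have vw : forall w, w \in ws -> nat_of_ord w != nat_of_ord v.
  by move=> w h; apply/eqP => e; move: vn; rewrite -(ord_inj e) h.
have h1 : size ws <= mcm (map (R6 l) ws) (Bset (I6 l) v).
  have [ov|ev] := boolP (odd v).
    apply: (@mcm_lb_nat l ws _ id U _ (fun w1 w2 _ _ e => e)).
    move=> w h; have := Ho w h; have := vw w h; have := ltn_ord w => hw o1 o2.
    split => [|x /= e]; first by [].
    rewrite RE BE A_odd // A_odd //; lia.
  have [vc|vc] := ltnP v (4 * l).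
    apply: (mcm_lb_nat (Fn := fun u => if u == v.+1 then u else u.-1)) => //.
      move=> w h; have := Ho w h; have := vw w h; have := ltn_ord w => hw o1 o2.
      split => [|x /= e]; first by case: ifP; lia.
      rewrite RE BE A_odd // A_even //; move: e; case: ifP; lia.
    move=> w1 w2 h1 h2; have := Ho w1 h1; have := Ho w2 h2.
    by case: ifP; case: ifP; lia.
  apply: (@mcm_lb_nat l ws _ id U _ (fun w1 w2 _ _ e => e)).
  move=> w h; have := Ho w h; have := vw w h; have := ltn_ord w => hw o1 o2.
  split => [|x /= e]; first by [].
  rewrite RE BE A_odd // A_c //; lia.
have h2 := mcm_le_size (map (R6 l) ws) (v |: Bset (I6 l) v).
rewrite size_map in h2; lia.
Qed.

Ltac ifs := repeat (case: ifP => ?); lia.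

Lemma size_full l (ws : seq 'I_(4 * l + 1)) :
  uniq ws -> all (fun u : 'I_(4 * l + 1) => odd u) ws ->
  (forall x : 'I_(4 * l + 1), odd x -> x \in ws) -> size ws = 2 * l.
Proof.
move=> U /allP Ho Hf; rewrite -(card_uniqP U) -(card_Eset l).
apply: eq_card => x; rewrite inE; apply/idP/idP; [exact: Ho | exact: Hf].
Qed.

Lemma card_B l (v : 'I_(4 * l + 1)) : ~~ odd v -> #|Bset (I6 l) v| <= 2 * l.
Proof.
move=> ev; have vl := ltn_ord v.
have [vc|vc] := ltnP v (4 * l).
  apply: (card_le_img (g := fun b => if 2 * b == v then 2 * b + 1 else 2 * b)) => x.
  have := ltn_ord x; rewrite BE A_even // => hx H.
  exists (x %/ 2); first lia.
  by ifs.
apply: (card_le_img (g := fun b => 2 * b + 1)) => x.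
have := ltn_ord x; rewrite BE A_c; last lia.
move=> hx H; exists (x %/ 2); lia.
Qed.

Lemma U1E m (v x : 'I_m) (L : {set 'I_m}) :
  (x \in v |: L) = (nat_of_ord x == nat_of_ord v) || (x \in L).
Proof. by rewrite in_setU1. Qed.

Lemma rem6 l (ws : seq 'I_(4 * l + 1)) (w v : 'I_(4 * l + 1)) : 0 < l ->
  uniq ws -> all (fun u : 'I_(4 * l + 1) => odd u) ws ->
  (forall x : 'I_(4 * l + 1), odd x -> x \in ws) -> ~~ odd w -> ~~ odd v ->
  nat_of_ord v != nat_of_ord w ->
  mcm (map (R6 l) (rcons ws w)) (v |: Bset (I6 l) v)
    == (mcm (map (R6 l) (rcons ws w)) (Bset (I6 l) v)).+1.
Proof.
move=> l0 U Hoa Hf ow ov vw.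
have sz := size_full U Hoa Hf.
move/allP: Hoa => Ho.
have vl := ltn_ord v; have wl := ltn_ord w.
have wn : w \notin ws by apply/negP => /Ho; rewrite (negbTE ow).
have U' : uniq (rcons ws w) by rewrite rcons_uniq wn U.
have memr : forall u, u \in rcons ws w -> (u = w) \/ (odd u /\ u \in ws).
  by move=> u; rewrite mem_rcons in_cons => /orP [/eqP ->|h]; [left|right; split => //; apply: Ho].
have h1 : size (rcons ws w) <= mcm (map (R6 l) (rcons ws w)) (v |: Bset (I6 l) v).
  have [wc|wc] := ltnP w (4 * l); last first.
    have wc' : nat_of_ord w = 4 * l by lia.
    have vc : v < 4 * l by lia.
    apply: (mcm_lb_nat (Fn := fun u => if u == 4 * l then nat_of_ord v
                             else if u == v.+1 then u else u.-1)) => //.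
      move=> u /memr [->|[ou uin]].
        split; first by rewrite ifT; lia.
        move=> x /= e; move: e; rewrite RE U1E BE A_c // A_even //.
        by ifs.
      have ul := ltn_ord u.
      split; first by ifs.
      move=> x /= e; move: e; rewrite RE U1E BE A_odd // A_even //.
      by ifs.
    move=> u1 u2 /memr h1 /memr h2.
    have := ltn_ord u1; have := ltn_ord u2.
    case: h1 => [->|[o1 _]]; case: h2 => [->|[o2 _]] //; ifs.
  have [vc|vc] := ltnP v (4 * l).
    apply: (mcm_lb_nat (Fn := fun u => if u == nat_of_ord w then v.+1 else u.-1)) => //.
      move=> u /memr [->|[ou uin]].
        split; first by rewrite ifT; lia.
        move=> x /= e; move: e; rewrite RE U1E BE A_even // A_even //.
        by ifs.
      have ul := ltn_ord u.
      split; first by ifs.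
      move=> x /= e; move: e; rewrite RE U1E BE A_odd // A_even //.
      by ifs.
    move=> u1 u2 /memr h1 /memr h2.
    have := ltn_ord u1; have := ltn_ord u2.
    case: h1 => [->|[o1 _]]; case: h2 => [->|[o2 _]] //; ifs.
  have vc' : nat_of_ord v = 4 * l by lia.
  apply: (mcm_lb_nat (Fn := fun u => if u == nat_of_ord w then 4 * l else u)) => //.
    move=> u /memr [->|[ou uin]].
      split; first by rewrite ifT; lia.
      move=> x /= e; move: e; rewrite RE U1E BE A_even // A_c //.
      by ifs.
    have ul := ltn_ord u.
    split; first by ifs.
    move=> x /= e; move: e; rewrite RE U1E BE A_odd // A_c //.
    by ifs.
  move=> u1 u2 /memr h1 /memr h2.
  have := ltn_ord u1; have := ltn_ord u2.
  case: h1 => [->|[o1 _]]; case: h2 => [->|[o2 _]] //; ifs.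
have h2 := mcm_U1 (map (R6 l) (rcons ws w)) (Bset (I6 l) v) v.
have h3 := mcm_le_card (map (R6 l) (rcons ws w)) (Bset (I6 l) v).
have h4 := card_B ov.
rewrite size_rcons sz in h1.
rewrite eqn_leq h2 /=; apply: leq_trans h1; rewrite ltnS; exact: leq_trans h3 h4.
Qed.

Lemma runs0 m (A : 'I_m -> {set 'I_m}) N G k :
  umcd_runs A N G k -> N = set0 -> k = size G.
Proof.
case=> [G0 //|N0 G0 w k0 wN _ _ e].
by rewrite e inE in wN.
Qed.

Lemma runs_exist m (A : 'I_m -> {set 'I_m}) n :
  forall (N : {set 'I_m}) G, #|N| <= n -> exists k, umcd_runs A N G k.
Proof.
elim: n => [|n IH] N G hN.
  move: hN; rewrite leqn0 cards_eq0 => /eqP ->.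
  by exists (size G); apply: umcd_done.
case: (set_0Vmem N) => [->|[x0 x0N]]; first by exists (size G); apply: umcd_done.
case: (@arg_minnP _ x0 (fun u => u \in N) (fun u => #|A u|) x0N) => w wN wmin.
set G' := rcons G (w |: A w).
have [k Hk] : exists k, umcd_runs A (umcd_next A (N :\ w) G') G' k.
  apply: IH.
  have : #|umcd_next A (N :\ w) G'| <= #|N :\ w|.
    by apply: subset_leq_card; apply/subsetP => v; rewrite inE => /andP [].
  move: hN; rewrite (cardsD1 w N) wN; lia.
by exists k; apply: (umcd_step wN) => // v; apply: wmin.
Qed.

Lemma phase l : 0 < l -> forall N G k, umcd_runs (I6 l) N G k ->
  forall ws : seq 'I_(4 * l + 1), uniq ws -> all (fun u : 'I_(4 * l + 1) => odd u) ws ->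
  G = map (R6 l) ws -> N = [set v | v \notin ws] -> k = 2 * l + 1.
Proof.
move=> l0 N G k; elim => [G0 | N0 G0 w k0 wN wmin run IH] ws U Ho eG eN.
  have : cO l \in [set v | v \notin ws].
    rewrite inE; apply/negP => /(allP Ho) /=; lia.
  by rewrite -eN inE.
have wn : w \notin ws by move: wN; rewrite eN inE.
have eG' : rcons G0 (w |: I6 l w) = map (R6 l) (rcons ws w) by rewrite map_rcons eG.
case: (boolP [exists x : 'I_(4 * l + 1), odd x && (x \notin ws)]).
  case/existsP => x /andP [ox xn].
  have ow : odd w.
    apply/negPn/negP => ew.
    have := wmin x; rewrite eN inE xn => /(_ isT).
    rewrite (card_A_odd ox); have := card_A_even l0 ew; lia.
  apply: (IH (rcons ws w)).
  - by rewrite rcons_uniq wn U.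
  - by rewrite all_rcons ow Ho.
  - exact: eG'.
  apply/setP => v; rewrite /umcd_next !inE eN !inE eG' mem_rcons in_cons.
  rewrite negb_or; case: (v =P w) => [->|/eqP vw] //=.
  case vin: (v \in ws) => //=.
  apply: nonrem; rewrite ?rcons_uniq ?wn ?all_rcons ?ow //.
  by rewrite mem_rcons in_cons negb_or vw vin.
rewrite negb_exists => /forallP Hf'.
have Hf : forall x : 'I_(4 * l + 1), odd x -> x \in ws.
  by move=> x ox; have := Hf' x; rewrite ox /= negbK.
have ow : ~~ odd w by apply/negP => /Hf; rewrite (negbTE wn).
have e0 : umcd_next (I6 l) (N0 :\ w) (rcons G0 (w |: I6 l w)) = set0.
  apply/setP => v; rewrite /umcd_next !inE eN !inE eG'.
  case: (v =P w) => [->|/eqP vw] //=.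
  case vin: (v \in ws) => //=.
  have ov : ~~ odd v by apply/negP => /Hf; rewrite vin.
  by rewrite (@rem6 l ws w v l0 U Ho Hf ow ov vw).
rewrite (runs0 run e0) size_rcons eG size_map (size_full U Ho Hf); lia.
Qed.

Lemma card_S l : #|[set x : 'I_(4 * l + 1) | odd x || (nat_of_ord x == 4 * l)]| = 2 * l + 1.
Proof.
have -> : [set x : 'I_(4 * l + 1) | odd x || (nat_of_ord x == 4 * l)] = cO l |: Eset l.
  apply/setP => x; rewrite !inE orbC; congr (_ || _).
rewrite cardsU1 card_Eset inE /=.
have -> : odd (4 * l) = false by lia.
by rewrite addnC addn1.
Qed.

Definition Sset l := [set x : 'I_(4 * l + 1) | odd x || (nat_of_ord x == 4 * l)].
Lemma SE l (x : 'I_(4 * l + 1)) : (x \in Sset l) = odd x || (nat_of_ord x == 4 * l).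
Proof. by rewrite inE. Qed.

Lemma lower l t r : has_code (I6 l) t r -> (2 * l + 1) * t <= r.
Proof.
case=> F [phi [psi Hc]].
set S := Sset l.
have disj : forall i j, i \in S -> j \in I6 l i -> j \notin S.
  move=> i j; have := ltn_ord i; have := ltn_ord j; rewrite !SE => hj hi /orP [oi|ic].
    by rewrite A_odd //; lia.
  by rewrite A_c; lia.
set X := pffun_on (0%R : 'rV[F]_t) S predT.
have X0 : forall f, f \in X -> forall j, j \notin S -> f j = 0%R.
  move=> f /pffun_onP [/subsetP sub _] j jS; apply/eqP; apply/negPn/negP => nz.
  by move: jS; rewrite (sub j) //; rewrite inE.
have inj : {in X &, injective (fun f : {ffun 'I_(4 * l + 1) -> 'rV[F]_t} => phi (fun j => f j))}.
  move=> f g fX gX e; apply/ffunP => i.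
  case iS: (i \in S); last by rewrite !X0 ?iS.
  have side : (fun j => if j \in I6 l i then f j else 0%R) = (fun j => if j \in I6 l i then g j else 0%R).
    apply: functional_extensionality => j; case: ifP => // jA.
    by rewrite !X0 // (disj i j iS jA).
  by rewrite -(Hc (fun j => f j) i) -(Hc (fun j => g j) i) /= e side.
have := card_in_imset inj.
rewrite card_pffun_on card_S.
have -> : #|predT : pred 'rV[F]_t| = #|F| ^ (1 * t) by rewrite -card_mx; apply: eq_card.
move=> e.
have : #|F| ^ (1 * t * (2 * l + 1)) <= #|F| ^ (1 * r).
  rewrite expnM -e -card_mx; exact: max_card.
have F1 : 1 < #|F|.
  apply: (@leq_trans #|[set (0%R : F); 1%R]|); first by rewrite cards2 eq_sym GRing.oner_eq0.
  exact: max_card.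
rewrite leq_exp2l //; lia.
Qed.
Section CodeSec.
Import GRing.Theory.
Local Open Scope ring_scope.

Lemma k0_proof l : (2 * l < 2 * l + 1)%N. Proof. by rewrite addn1. Qed.
Definition kd l (n : nat) : 'I_(2 * l + 1) := insubd (Ordinal (k0_proof l)) n.
Lemma vkd l n : (n < 2 * l + 1)%N -> nat_of_ord (kd l n) = n.
Proof. by move=> h; rewrite /kd val_insubd h. Qed.

Definition sx (K : finFieldType) l (x : 'I_(4 * l + 1) -> 'rV[K]_1) (n : nat) : K :=
  x (nd l n) ord0 ord0.

Definition enc (K : finFieldType) l (x : 'I_(4 * l + 1) -> 'rV[K]_1) : 'rV[K]_(2 * l + 1) :=
  \row_(k < 2 * l + 1) (if (k < 2 * l)%N then sx x (2 * k) + sx x (2 * k + 1)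
                        else sx x (4 * l) + \sum_(b < 2 * l) sx x (2 * b + 1)).

Definition dec (K : finFieldType) l (i : 'I_(4 * l + 1)) (y : 'rV[K]_(2 * l + 1))
  (z : 'I_(4 * l + 1) -> 'rV[K]_1) : 'rV[K]_1 :=
  const_mx (if odd i then y ord0 (kd l (i %/ 2)) - sx z i.-1
   else if (i < 4 * l)%N then y ord0 (kd l (i %/ 2)) -
          (y ord0 (kd l (2 * l)) - sx z (4 * l) - \sum_(b < 2 * l) sx z (2 * b + 1))
   else y ord0 (kd l (2 * l)) - \sum_(b < 2 * l) (y ord0 (kd l b) - sx z (2 * b))).

Lemma code_ok (K : finFieldType) l : is_index_code (I6 l) (@enc K l) (@dec K l).
Proof.
move=> x i.
set z := fun j => if j \in I6 l i then x j else 0.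
have hi := ltn_ord i.
have yE : forall k, (k < 2 * l + 1)%N -> enc x ord0 (kd l k) =
    if (k < 2 * l)%N then sx x (2 * k) + sx x (2 * k + 1)
    else sx x (4 * l) + \sum_(b < 2 * l) sx x (2 * b + 1).
  by move=> k hk; rewrite mxE vkd.
have zE : forall n, sx z n = if nd l n \in I6 l i then sx x n else 0.
  by move=> n; rewrite /sx /z; case: ifP => //; rewrite mxE.
have xi : x i ord0 ord0 = sx x i.
  by rewrite /sx; congr (x _ _ _); apply/ord_inj; rewrite vnd.
apply/matrixP => a0 b0; rewrite (ord1 a0) (ord1 b0) mxE xi /=.
have [oi|ei] := boolP (odd i).
  rewrite yE; last lia.
  rewrite ifT; last lia.
  rewrite zE A_odd // vnd; last lia.
  rewrite eqxx.
  have -> : (2 * (i %/ 2))%N = i.-1 by lia.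
  have -> : (i.-1 + 1)%N = i by lia.
  ring.
have [ic|ic] := ltnP i (4 * l).
  have ha : (i %/ 2 < 2 * l)%N by lia.
  set a := Ordinal ha.
  have hs : \sum_(b < 2 * l) sx z (2 * b + 1) = \sum_(b < 2 * l) sx x (2 * b + 1) - sx x (i.+1).
    rewrite (bigD1 a) //= [in RHS](bigD1 a) //=.
    have -> : (2 * (i %/ 2) + 1)%N = i.+1 by lia.
    rewrite zE A_even // vnd; last lia.
    have -> : odd i.+1 && (i.+1 != i.+1) || (i.+1 == 4 * l) = false by lia.
    rewrite add0r.
    have -> : \sum_(j < 2 * l | j != a) sx z (2 * j + 1) = \sum_(j < 2 * l | j != a) sx x (2 * j + 1).
      apply: eq_bigr => j ja; have := ltn_ord j => hj.
      have ja' : nat_of_ord j != (i %/ 2)%N by apply: contra ja => /eqP e; apply/eqP/ord_inj.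
      rewrite zE A_even // vnd; last lia.
      by rewrite ifT //; lia.
    ring.
  rewrite hs yE; last lia.
  rewrite yE; last lia.
  rewrite ifT; last lia.
  rewrite ifF; last lia.
  rewrite zE A_even // vnd; last lia.
  rewrite ifT; last lia.
  have -> : (2 * (i %/ 2))%N = i by lia.
  have -> : (i + 1)%N = i.+1 by lia.
  ring.
have i4 : nat_of_ord i = (4 * l)%N by lia.
rewrite yE; last lia.
rewrite ifF; last lia.
have -> : \sum_(b < 2 * l) (enc x ord0 (kd l b) - sx z (2 * b)) = \sum_(b < 2 * l) sx x (2 * b + 1).
  apply: eq_bigr => j _; have := ltn_ord j => hj.
  rewrite yE; last lia.
  rewrite ifT; last lia.
  rewrite zE A_c // vnd; last lia.
  rewrite ifT; last lia.
  ring.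
by rewrite addrK i4.
Qed.

Lemma upper l : has_code (I6 l) 1 (2 * l + 1).
Proof. by exists ('F_2 : finFieldType); exists (@enc _ l); exists (@dec _ l); apply: code_ok. Qed.
End CodeSec.

Theorem proposition10 (l : nat) : 0 < l ->
  (exists k, umcd_out (I6 l) k) /\
  (forall k, umcd_out (I6 l) k -> beta_eq (I6 l) k).
Proof.
move=> l0; split.
  by apply: (@runs_exist _ (I6 l) #|[set: 'I_(4 * l + 1)]|).
move=> k run.
have -> : k = 2 * l + 1.
  by apply: (@phase l l0 _ _ _ run [::]).
split.
  by move=> t r _ hc; apply: lower hc.
move=> n n0; exists 1, (2 * l + 1); split => //; first exact: upper.
lia.
Qed.
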